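(* Let $H = (V,E)$ be a hypertree such that for each edge $e \in E$, with $m = |e|$, there is a choice of subset $S(\pi) \subseteq [m-1]$ for each bijection $\pi: e \to [m]$ such that the set of nonconstant colorings $\chi: e \to \mathbb{P}$ is the disjoint union $$\biguplus_{\pi} A(\pi, S(\pi))$$ over all bijections $\pi: e \to [m]$. Then $X_H$ is $F$-positive.
   Context: $\mathbb{P}=\{1,2,\ldots\}$. For a finite set $e$ with $|e|=m$, a bijection $\pi: e \to [m]$ and $S \subseteq [m-1]$, $A(\pi,S)$ is the set of maps $\chi: e \to \mathbb{P}$ with $\chi(\pi^{-1}(1)) \le \cdots \le \chi(\pi^{-1}(m))$ and $\chi(\pi^{-1}(i)) < \chi(\pi^{-1}(i+1))$ for $i \in S$. A hypergraph is a pair $H=(V,E)$ with $V$ finite and $E$ a family of subsets of $V$ with $|e|>1$. A path is a sequence $v_1, e_1, v_2, \ldots, e_m, v_{m+1}$ with $e_i \in E$, $v_i, v_{i+1} \in e_i$, edges distinct and vertices distinct except that $v_1 = v_{m+1}$ is allowed; if $v_1 = v_{m+1}$ and $m>1$ it is a cycle. A hypertree is a connected hypergraph with no cycles. A coloring of $V$ is proper if it is nonconstant on every edge; $X_H = \sum_\chi \prod_{v\in V} x_{\chi(v)}$ over proper colorings. With $n=|V|$, $F_S = \sum x_{i_1}\cdots x_{i_n}$ over $i_1 \le \cdots \le i_n$ in $\mathbb{P}$ with $i_j < i_{j+1}$ for $j \in S$; $X_H$ is $F$-positive if all coefficients of its expansion in the $F_S$, $S \subseteq [n-1]$, are nonnegative.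 *)

(* Defs.v *)
From mathcomp Require Import all_boot all_order all_algebra.
Set Implicit Arguments. Unset Strict Implicit. Unset Printing Implicit Defensive.
Import Order.TTheory GRing.Theory Num.Theory.

Definition hypergraph (V : finType) (E : {set {set V}}) : Prop :=
  forall e, e \in E -> 1 < #|e|.

Definition hadj (V : finType) (E : {set {set V}}) : rel V :=
  fun u v => [exists e in E, (u \in e) && (v \in e)].

Definition hconnected (V : finType) (E : {set {set V}}) : Prop :=
  forall u v : V, connect (hadj E) u v.

(* A cycle v_1, e_1, v_2, ..., e_m, v_{m+1} = v_1 with m > 1, distinct edges,
   distinct vertices v_1..v_m; encoded by the sequences vs = [v_1..v_m] and
   es = [e_1..e_m], indices taken 0-based and cyclically. *)
Definition hcycle (V : finType) (E : {set {set V}})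
    (vs : seq V) (es : seq {set V}) : Prop :=
  let m := size vs in
  1 < m /\ size es = m /\ uniq vs /\ uniq es /\
  all (fun e => e \in E) es /\
  (forall i (x : V), i < m ->
     (nth x vs i \in nth set0 es i) && (nth x vs ((i.+1) %% m) \in nth set0 es i)).

Definition hypertree (V : finType) (E : {set {set V}}) : Prop :=
  [/\ hypergraph E, hconnected E & forall vs es, ~ hcycle E vs es].

(* A bijection pi : e -> [m] is encoded by the sequence
   [pi^-1(1); ...; pi^-1(m)] : a duplicate-free enumeration of e. *)
Definition edge_bij (V : finType) (e : {set V}) (s : seq V) : bool :=
  uniq s && [forall v, (v \in s) == (v \in e)].

(* membership of i+1 in S, for S a subset of [m-1] represented as {set 'I_m.-1}
   (element x of 'I_m.-1 stands for x+1 in [m-1]). *)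
Definition inS (k : nat) (S : {set 'I_k}) (j : nat) : bool :=
  [exists x in S, val x == j].

Definition inA (V : finType) (s : seq V) (k : nat) (S : {set 'I_k})
    (chi : V -> nat) : Prop :=
  let cs := map chi s in
  forall j, j.+1 < size s ->
    nth 0 cs j <= nth 0 cs j.+1 /\ (inS S j -> nth 0 cs j < nth 0 cs j.+1).

Definition nonconstant_on (V : finType) (e : {set V}) (chi : V -> nat) : Prop :=
  exists u v, [/\ u \in e, v \in e & chi u <> chi v].

(* The hypothesis of Theorem 5.1 for a single edge e with S as choice function:
   nonconstant colorings e -> P are the disjoint union of the A(pi, S(pi)). *)
Definition edge_decomp (V : finType) (e : {set V})
    (S : seq V -> {set 'I_(#|e|).-1}) : Prop :=
  (forall chi : V -> nat, (forall v, v \in e -> 0 < chi v) ->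
     (nonconstant_on e chi <-> exists s, edge_bij e s /\ inA s (S s) chi)) /\
  (forall (chi : V -> nat) s1 s2, (forall v, v \in e -> 0 < chi v) ->
     edge_bij e s1 -> edge_bij e s2 ->
     inA s1 (S s1) chi -> inA s2 (S s2) chi -> s1 = s2).

(* Colorings truncated to N colors: value i : 'I_N stands for color i+1. *)
Definition proper (V : finType) (E : {set {set V}}) N (chi : {ffun V -> 'I_N}) : bool :=
  [forall e in E, [exists u in e, exists v in e, chi u != chi v]].

(* coefficient of x^alpha (alpha i = exponent of x_{i+1}) in X_H(x_1..x_N,0,0,...) *)
Definition XH_coef (V : finType) (E : {set {set V}}) N (alpha : {ffun 'I_N -> nat}) : nat :=
  #|[set chi : {ffun V -> 'I_N} | proper E chi &&
      [forall i, #|[set v | chi v == i]| == alpha i]]|.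

Definition Fseq n N (S : {set 'I_n.-1}) (w : {ffun 'I_n -> 'I_N}) : bool :=
  [forall j : 'I_n, forall k : 'I_n, (val k == (val j).+1) ==>
     ((w j <= w k) && (inS S (val j) ==> (w j < w k)))].

(* coefficient of x^alpha in F_S(x_1..x_N,0,0,...) *)
Definition F_coef n N (S : {set 'I_n.-1}) (alpha : {ffun 'I_N -> nat}) : nat :=
  #|[set w : {ffun 'I_n -> 'I_N} | Fseq S w &&
      [forall i, #|[set j | w j == i]| == alpha i]]|.

(* X_H is F-positive: X_H = sum_S c_S F_S with all c_S >= 0, equality of power
   series checked coefficientwise on every truncation to finitely many variables. *)
Definition F_positive (V : finType) (E : {set {set V}}) : Prop :=
  exists c : {set 'I_(#|V|).-1} -> int,
    (forall S, 0 <= c S)%R /\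
    forall N (alpha : {ffun 'I_N -> nat}),
      ((XH_coef E alpha)%:Z = \sum_(S : {set 'I_(#|V|).-1}) c S * (F_coef S alpha)%:Z)%R.

(* Main.v *)
Require Import Defs.
From mathcomp Require Import all_boot all_order all_algebra.
From mathcomp Require Import zify.
From Stdlib Require Import ClassicalEpsilon.
Set Implicit Arguments. Unset Strict Implicit. Unset Printing Implicit Defensive.

Definition ltk (V : finType) (f rk : V -> nat) (u v : V) : bool :=
  (f u < f v) || ((f u == f v) && (rk u < rk v)).

Lemma ltk_trans (V : finType) (f rk : V -> nat) u v x :
  ltk f rk u v -> ltk f rk v x -> ltk f rk u x.
Proof. rewrite /ltk; lia. Qed.

Lemma ltk_irr (V : finType) (f rk : V -> nat) u : ltk f rk u u = false.
Proof. rewrite /ltk; lia. Qed.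

Lemma ltk_asym (V : finType) (f rk : V -> nat) u v : ltk f rk u v -> ltk f rk v u = false.
Proof. rewrite /ltk; lia. Qed.

Lemma ltk_total (V : finType) (f rk : V -> nat) u v : injective rk -> u != v ->
  ltk f rk u v || ltk f rk v u.
Proof.
move=> rki uv; have : rk u != rk v by apply: contra uv => /eqP/rki ->.
rewrite /ltk; lia.
Qed.

Lemma ltk_le (V : finType) (f rk : V -> nat) u v : ltk f rk u v -> f u <= f v.
Proof. rewrite /ltk; lia. Qed.

Lemma inj_surj (V : finType) (pi : V -> 'I_#|V|) : injective pi -> forall i, exists v, pi v = i.
Proof.
move=> inj i; have := inj_card_onto inj _ i; rewrite card_ord leqnn => /(_ isT).
by case/codomP => v ->; exists v.
Qed.

Lemma card_pre_bij (V : finType) (pi : V -> 'I_#|V|) (P : pred 'I_#|V|) :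
  injective pi -> #|[set v | P (pi v)]| = #|[set i | P i]|.
Proof.
move=> inj; rewrite -(card_imset _ inj); apply: eq_card => i; rewrite inE.
apply/imsetP/idP => [[v]|Pi]; first by rewrite inE => Pv ->.
by have [v ev] := inj_surj inj i; exists v; rewrite // inE ev.
Qed.

Lemma card_ltord n k : k <= n -> #|[set i : 'I_n | i < k]| = k.
Proof.
move=> kn; have wi : injective (widen_ord kn) by move=> a b /(congr1 val) /= /val_inj.
rewrite -[RHS]card_ord -(card_imset _ wi); apply: eq_card => i; rewrite inE.
apply/idP/imsetP => [ik|[j _ ->]]; last by rewrite /= ltn_ord.
by exists (Ordinal ik) => //; apply: val_inj.
Qed.

Lemma card_lt_pi (V : finType) (pi : V -> 'I_#|V|) v : injective pi ->
  #|[set u | pi u < pi v]| = pi v.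
Proof.
move=> inj; rewrite (card_pre_bij (fun i : 'I_#|V| => i < pi v) inj).
by apply: card_ltord; apply: ltnW.
Qed.

Definition Des (V : finType) (rk : V -> nat) (pi : {ffun V -> 'I_#|V|}) : {set 'I_(#|V|).-1} :=
  [set j : 'I_(#|V|).-1 | [exists u, exists v,
     (val (pi u) == val j) && (val (pi v) == (val j).+1) && (rk v < rk u)]].

Definition wof (V : finType) N (pi : {ffun V -> 'I_#|V|}) (w : {ffun 'I_#|V| -> 'I_N}) : V -> nat :=
  fun x => val (w (pi x)).

Lemma A3_step (V : finType) N (rk : V -> nat) (pi : {ffun V -> 'I_#|V|}) (w : {ffun 'I_#|V| -> 'I_N}) u v :
  injective rk -> injective pi -> Fseq (Des rk pi) w -> val (pi v) = (pi u).+1 ->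
  ltk (wof pi w) rk u v.
Proof.
move=> rki pii /forallP /(_ (pi u)) /forallP /(_ (pi v)) /implyP.
move=> F e; move: (F (introT eqP e)) => /andP[le lt].
have uv : u != v by apply/eqP => euv; move: e; rewrite euv /=; lia.
have : rk u != rk v by apply: contra uv => /eqP/rki ->.
rewrite neq_ltn => /orP[r|r]. rewrite /ltk /wof /=.
by move: le r; set a := nat_of_ord (w (pi u)); set b := nat_of_ord (w (pi v)); lia.
have e' : nat_of_ord (pi v) = (pi u).+1 by [].
have hj : (pi u) < #|V|.-1 by have := ltn_ord (pi v); lia.
have : inS (Des rk pi) (pi u).
  apply/existsP; exists (Ordinal hj); rewrite /= eqxx andbT inE.
  by apply/existsP; exists u; apply/existsP; exists v; rewrite /= eqxx e eqxx r.
by move/implyP: lt => lt /lt; rewrite /ltk /wof /=; move: r; set a := nat_of_ord (w (pi u)); set b := nat_of_ord (w (pi v)); lia.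
Qed.

Lemma A3 (V : finType) N (rk : V -> nat) (pi : {ffun V -> 'I_#|V|}) (w : {ffun 'I_#|V| -> 'I_N}) :
  injective rk -> injective pi -> Fseq (Des rk pi) w ->
  forall u v, pi u < pi v -> ltk (wof pi w) rk u v.
Proof.
move=> rki pii F.
suff H : forall d u v, nat_of_ord (pi v) = (pi u) + d.+1 -> ltk (wof pi w) rk u v.
  by move=> u v lt; apply: (H (pi v - pi u).-1); lia.
elim=> [|d IH] u v e; first by apply: A3_step => //; change (nat_of_ord (pi v) = (pi u).+1); lia.
have hm : (pi u).+1 < #|V| by have := ltn_ord (pi v); lia.
have [m em] := inj_surj pii (Ordinal hm).
apply: (@ltk_trans _ _ _ _ m); first by apply: A3_step => //; rewrite em.
by apply: IH; rewrite em /= e addSn addnS.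
Qed.

Lemma A4 (V : finType) N (rk : V -> nat) (pi : {ffun V -> 'I_#|V|}) (w : {ffun 'I_#|V| -> 'I_N}) :
  injective rk -> injective pi -> Fseq (Des rk pi) w ->
  forall u v, ltk (wof pi w) rk u v = (pi u < pi v).
Proof.
move=> rki pii F u v; apply/idP/idP; last exact: A3.
move=> l; rewrite ltnNge leq_eqVlt; apply/negP => /orP[/eqP/val_inj/pii e|lt].
  by move: l; rewrite e ltk_irr.
by move: l; rewrite (ltk_asym (A3 rki pii F lt)).
Qed.

Lemma A5 (V : finType) N (rk : V -> nat) (pi : {ffun V -> 'I_#|V|}) (w : {ffun 'I_#|V| -> 'I_N}) :
  injective rk -> injective pi -> Fseq (Des rk pi) w ->
  forall v, #|[set u | ltk (wof pi w) rk u v]| = pi v.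
Proof.
move=> rki pii F v; rewrite -(card_lt_pi v pii); apply: eq_card => u.
by rewrite !inE (A4 rki pii F).
Qed.

Lemma ltk_ext (V : finType) (f g rk : V -> nat) u v : f =1 g -> ltk f rk u v = ltk g rk u v.
Proof. by move=> e; rewrite /ltk !e. Qed.

Lemma ltk_lt (V : finType) (f rk : V -> nat) u v : ltk f rk u v -> rk v < rk u -> f u < f v.
Proof. rewrite /ltk; lia. Qed.

Lemma ltk_of_le (V : finType) (f rk : V -> nat) u v : f u <= f v -> rk u < rk v -> ltk f rk u v.
Proof. rewrite /ltk; lia. Qed.

Lemma ltk_of_lt (V : finType) (f rk : V -> nat) u v : f u < f v -> ltk f rk u v.
Proof. rewrite /ltk; lia. Qed.

Definition pos (V : finType) (f rk : V -> nat) (v : V) : nat := #|[set u | ltk f rk u v]|.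

Lemma pos_mono (V : finType) (f rk : V -> nat) u v : ltk f rk u v -> pos f rk u < pos f rk v.
Proof.
move=> l; apply: proper_card; apply/properP; split.
  by apply/subsetP => x; rewrite !inE => h; apply: ltk_trans h l.
by exists u; rewrite !inE ?l // ltk_irr.
Qed.

Lemma pos_lt (V : finType) (f rk : V -> nat) v : pos f rk v < #|V|.
Proof.
rewrite /pos -cardsT; apply: proper_card; apply/properP; split; first exact: subsetT.
by exists v; rewrite !inE ?ltk_irr.
Qed.

Definition Qc (V : finType) (W T : {set V * V}) (f : V -> nat) : bool :=
  [forall p in W, f p.1 <= f p.2] && [forall p in T, f p.1 < f p.2].

Definition Lin (V : finType) (W T : {set V * V}) (pi : {ffun V -> 'I_#|V|}) : bool :=
  [forall p in W, pi p.1 < pi p.2] && [forall p in T, pi p.1 < pi p.2].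

Definition cont (A : finType) N (f : {ffun A -> 'I_N}) (alpha : {ffun 'I_N -> nat}) : bool :=
  [forall i, #|[set x | f x == i]| == alpha i].

Lemma cont_comp (V : finType) N (pi : {ffun V -> 'I_#|V|}) (w : {ffun 'I_#|V| -> 'I_N}) alpha :
  injective pi -> cont [ffun v => w (pi v)] alpha = cont w alpha.
Proof.
move=> pii; apply: eq_forallb => i.
rewrite -(card_pre_bij (fun j => w j == i) pii); congr (_ == _); apply: eq_card => v.
by rewrite !inE ffunE.
Qed.


Lemma count_bij (V : finType) N (alpha : {ffun 'I_N -> nat}) (rk : V -> nat) (W T : {set V * V}) :
  injective rk -> (forall p, p \in W -> rk p.1 < rk p.2) -> (forall p, p \in T -> rk p.2 < rk p.1) ->
  #|[set chi : {ffun V -> 'I_N} | Qc W T (fun v => val (chi v)) && cont chi alpha]| =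
  #|[set x : {ffun V -> 'I_#|V|} * {ffun 'I_#|V| -> 'I_N} |
      [&& injectiveb x.1, Lin W T x.1, Fseq (Des rk x.1) x.2 & cont x.2 alpha]]|.
Proof.
move=> rki hW hT.
set Dom := [set x : {ffun V -> 'I_#|V|} * {ffun 'I_#|V| -> 'I_N} | _].
pose F (x : {ffun V -> 'I_#|V|} * {ffun 'I_#|V| -> 'I_N}) := [ffun v => x.2 (x.1 v)].
have wofF x : wof x.1 x.2 =1 (fun v => val (F x v)) by move=> v; rewrite /wof /F ffunE.
have Finj : {in Dom &, injective F}.
  move=> [p1 w1] [p2 w2]; rewrite !inE /= => /and4P[/injectiveP i1 _ F1 _] /and4P[/injectiveP i2 _ F2 _] e.
  have ep : p1 = p2.
    apply/ffunP => v; apply: val_inj => /=.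
    rewrite -(A5 rki i1 F1) -(A5 rki i2 F2); apply: eq_card => u; rewrite !inE.
    rewrite (ltk_ext _ _ _ (wofF (p1, w1))) (ltk_ext _ _ _ (wofF (p2, w2))).
    by rewrite e.
  subst p2; congr pair; apply/ffunP => i; have [v <-] := inj_surj i1 i.
  by have := congr1 (fun g : {ffun V -> 'I_N} => g v) e; rewrite /F /= !ffunE.
rewrite -(card_in_imset Finj); apply: eq_card => chi; rewrite inE.
apply/andP/imsetP => [[Q C]|[[p w]]]; last first.
  rewrite inE /= => /and4P[/injectiveP pii /andP[/forallP LW /forallP LT] Fs Cw] ->.
  rewrite cont_comp // Cw; split => //; apply/andP; split; apply/forallP => q; apply/implyP => hq.
    have := A3 rki pii Fs (implyP (LW q) hq) => /ltk_le.
    by rewrite /wof /F /= !ffunE.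
  have := ltk_lt (A3 rki pii Fs (implyP (LT q) hq)) (hT q hq).
  by rewrite /wof /F /= !ffunE.
pose f := fun v => val (chi v).
pose pi := [ffun v => Ordinal (pos_lt f rk v)].
have pii : injective pi.
  move=> u v /(congr1 val); rewrite /pi !ffunE /= => e; apply/eqP; apply: contraT => uv.
  by case/orP: (ltk_total f rki uv) => /pos_mono; rewrite e ltnn.
have piv v : nat_of_ord (pi v) = pos f rk v by rewrite /pi ffunE.
pose sig (i : 'I_#|V|) := odflt (enum_val i) [pick v | pi v == i].
have sigK v : sig (pi v) = v.
  rewrite /sig; case: pickP => [u /eqP /pii // | /(_ v)]; by rewrite eqxx.
have piK i : pi (sig i) = i by have [v <-] := inj_surj pii i; rewrite sigK.
pose w := [ffun i => chi (sig i)].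
have Fe : F (pi, w) = chi by apply/ffunP => v; rewrite /F ffunE /= ffunE sigK.
exists (pi, w) => //; rewrite inE /=.
have Fseqw : Fseq (Des rk pi) w.
  apply/forallP => j; apply/forallP => k; apply/implyP => /eqP ek.
  have ab : ltk f rk (sig j) (sig k).
    have ne : sig j != sig k by apply/eqP => /(congr1 pi); rewrite !piK => ejk; move: ek; rewrite ejk; apply: n_Sn.
    case/orP: (ltk_total f rki ne) => // /pos_mono; rewrite -!piv !piK; move: ek => /= ->; rewrite ltnNge leqnSn.
    by [].
  rewrite !ffunE; apply/andP; split; first exact: ltk_le ab.
  apply/implyP => /existsP [x /andP[]]; rewrite inE => /existsP[u /existsP[v /andP[/andP[e1 e2] r]]] /eqP ex.
  have eu : u = sig j by apply: pii; rewrite piK; apply: val_inj; rewrite /= (eqP e1) ex.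
  have ev : v = sig k by apply: pii; rewrite piK; apply: val_inj; rewrite /= (eqP e2) ex ek.
  by apply: ltk_lt ab _; rewrite -eu -ev.
have Cw : cont w alpha.
  by rewrite -(@cont_comp _ _ pi w alpha pii); have -> : [ffun v => w (pi v)] = chi by rewrite -Fe.
rewrite Fseqw Cw andbT andbT.
apply/andP; split; first by apply/injectiveP.
move/andP: Q => [/forallP QW /forallP QT].
apply/andP; split; apply/forallP => q; apply/implyP => hq; rewrite !piv; apply: pos_mono.
  exact: (@ltk_of_le _ f rk _ _ (implyP (QW q) hq) (hW q hq)).
exact: (@ltk_of_lt _ f rk _ _ (implyP (QT q) hq)).
Qed.

Lemma count_sum (V : finType) N (alpha : {ffun 'I_N -> nat}) (rk : V -> nat) (W T : {set V * V}) :
  #|[set x : {ffun V -> 'I_#|V|} * {ffun 'I_#|V| -> 'I_N} |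
      [&& injectiveb x.1, Lin W T x.1, Fseq (Des rk x.1) x.2 & cont x.2 alpha]]| =
  \sum_(S : {set 'I_(#|V|).-1})
     #|[set pi : {ffun V -> 'I_#|V|} | injectiveb pi && Lin W T pi && (Des rk pi == S)]| * F_coef S alpha.
Proof.
rewrite -sum1_card.
rewrite (eq_bigl (fun x : {ffun V -> 'I_#|V|} * {ffun 'I_#|V| -> 'I_N} => (injectiveb x.1 && Lin W T x.1) && (Fseq (Des rk x.1) x.2 && cont x.2 alpha))); last first.
  by move=> x; rewrite inE !andbA.
rewrite -(pair_big_dep (fun p : {ffun V -> 'I_#|V|} => injectiveb p && Lin W T p) (fun (p : {ffun V -> 'I_#|V|}) (w : {ffun 'I_#|V| -> 'I_N}) => Fseq (Des rk p) w && cont w alpha) (fun _ _ => 1)) /=.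
rewrite (partition_big (fun p : {ffun V -> 'I_#|V|} => Des rk p) predT) //=.
apply: eq_bigr => S _.
rewrite -sum_nat_const; apply: eq_big => [p|p /andP[_ /eqP <-]]; first by rewrite inE.
by rewrite sum1_card /F_coef; apply: eq_card => w; rewrite inE.
Qed.

Definition pc (V : finType) (E : {set {set V}}) (vs : seq V) (es : seq {set V}) : Prop :=
  [/\ size es = size vs, uniq vs, (forall e, e \in es -> e \in E) & [/\
      (forall i x, i < size vs -> nth x vs i \in nth set0 es i),
      (forall i x, i.+1 < size vs -> nth x vs i.+1 \in nth set0 es i) &
      (forall x, head x vs \in last set0 es)]].

Definition nc (V : finType) (es : seq {set V}) : Prop :=
  exists a b, [/\ a \in es, b \in es & a != b].

Lemma pc_hcycle (V : finType) (E : {set {set V}}) vs es :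
  pc E vs es -> nc es -> uniq es -> hcycle E vs es.
Proof.
case=> sz u inE' [h1 h2 h3] [a [b [ai bi ab]]] ue.
have m2 : 1 < size vs.
  rewrite -sz; case: es ai bi {ue sz h1 h2 h3 inE'} => [|c [|d t]] //=.
  by rewrite !inE => /eqP ea /eqP eb; rewrite ea eb eqxx in ab.
split; first done; split; first done; split; first done; split; first done; split.
  by apply/allP => e; exact: inE'.
move=> i x lt; rewrite h1 //=.
case: (ltnP i.+1 (size vs)) => hi; first by rewrite modn_small // h2.
have ei : i.+1 = size vs by lia.
rewrite ei modnn nth0 (_ : i = (size es).-1); last by lia.
by rewrite nth_last.
Qed.

Lemma shortcut (V : finType) (E : {set {set V}}) :
  (forall vs es, ~ hcycle E vs es) -> forall vs es, pc E vs es -> nc es -> False.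
Proof.
move=> noc.
suff H : forall m vs es, size vs <= m -> pc E vs es -> nc es -> False.
  by move=> vs es; exact: H.
elim=> [|m IH] vs es.
  rewrite leqn0 => /eqP s0 [sz _ _ _] [a [b [ai _ _]]].
  by move: ai; rewrite (size0nil (etrans sz s0)).
move=> sm P ncs.
have [ue|] := boolP (uniq es); first by apply: (noc vs es); apply: pc_hcycle.
case/(uniqPn set0) => i [j [ij jm eij]].
have P0 := P; case: P => [sz uv inE' [h1 h2 h3]].
rewrite sz in jm.
pose vs1 := take (j - i) (drop i.+1 vs). pose es1 := take (j - i) (drop i.+1 es).
pose vs2 := take i.+1 vs ++ drop j.+1 vs. pose es2 := take i.+1 es ++ drop j.+1 es.
have sz1 : size vs1 = j - i by rewrite size_takel // size_drop; lia.
have sz1' : size es1 = j - i by rewrite size_takel // size_drop; lia.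
have n1 k x : k < j - i -> nth x vs1 k = nth x vs (i.+1 + k).
  by move=> h; rewrite nth_take // nth_drop.
have n1' k : k < j - i -> nth set0 es1 k = nth set0 es (i.+1 + k).
  by move=> h; rewrite nth_take // nth_drop.
have P1 : pc E vs1 es1.
  split.
  - by rewrite sz1 sz1'.
  - by apply: take_uniq; apply: drop_uniq.
  - by move=> e /mem_take /mem_drop; exact: inE'.
  split.
  - by move=> k x; rewrite sz1 => h; rewrite n1 // n1' //; apply: h1; lia.
  - move=> k x; rewrite sz1 => h; rewrite n1 // n1' 1?ltnW // addnS; apply: h2; lia.
  - move=> x; rewrite -nth0 n1; last by lia.
    rewrite -nth_last sz1' n1'; last by lia.
    rewrite (_ : i.+1 + (j - i).-1 = j); last by lia.
    by rewrite -eij addn0; apply: h2; lia.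
have sz2 : size vs2 = i.+1 + (size vs - j.+1) by rewrite size_cat size_takel ?size_drop //; lia.
have sz2' : size es2 = i.+1 + (size vs - j.+1) by rewrite size_cat size_takel ?size_drop sz //; lia.
have n2 k x : nth x vs2 k = if k < i.+1 then nth x vs k else nth x vs (j.+1 + (k - i.+1)).
  rewrite nth_cat size_takel; last by lia.
  by case: ifP => h; rewrite ?nth_take ?nth_drop.
have n2' k : nth set0 es2 k = if k < i.+1 then nth set0 es k else nth set0 es (j.+1 + (k - i.+1)).
  rewrite nth_cat size_takel; last by lia.
  by case: ifP => h; rewrite ?nth_take ?nth_drop.
have P2 : pc E vs2 es2.
  split.
  - by rewrite sz2 sz2'.
  - apply: (subseq_uniq _ uv); rewrite -[X in subseq _ X](cat_take_drop i.+1 vs).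
    apply: cat_subseq (subseq_refl _) _.
    rewrite (_ : j.+1 = (j - i) + i.+1); last by lia.
    by rewrite -drop_drop drop_subseq.
  - by move=> e; rewrite mem_cat => /orP[/mem_take|/mem_drop]; exact: inE'.
  split.
  - move=> k x; rewrite sz2 => h; rewrite n2 n2'; case: ifP => hk; apply: h1; lia.
  - move=> k x; rewrite sz2 => h; rewrite n2 n2'.
    case: (ltnP k.+1 i.+1) => hk; first by rewrite (ltnW hk); apply: h2; lia.
    case: (ltnP k i.+1) => hk2.
      have -> : k = i by lia.
      rewrite subnn addn0 eij; apply: h2; lia.
    rewrite (_ : j.+1 + (k.+1 - i.+1) = (j.+1 + (k - i.+1)).+1); last by lia.
    apply: h2; lia.
  - move=> x; suff [-> ->] : head x vs2 = head x vs /\ last set0 es2 = last set0 es by apply: h3.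
    split; first by rewrite /vs2; case: (vs) jm.
    rewrite -!nth_last sz2' sz n2'; case: ifP => hk.
      rewrite (_ : (i.+1 + (size vs - j.+1)).-1 = i); last by lia.
      rewrite eij; congr nth; lia.
    congr nth; lia.
have memsplit a : a \in es -> a \in es1 \/ a \in es2.
  rewrite -{1}(cat_take_drop i.+1 es) -{1}(cat_take_drop (j - i) (drop i.+1 es)) drop_drop.
  rewrite (_ : j - i + i.+1 = j.+1); last by lia.
  by rewrite !mem_cat => /orP[h|/orP[h|h]]; [right; rewrite h | left | right; rewrite h orbT].
set e := nth set0 es i.
have e1 : e \in es1.
  have -> : e = nth set0 es1 (j - i).-1 by rewrite n1' ?/e ?eij; [congr nth; lia | lia].
  by apply: mem_nth; rewrite sz1'; lia.
have e2 : e \in es2.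
  rewrite mem_cat /e -(nth_take set0 (ltnSn i)) mem_nth // size_takel // sz; lia.
have nc12 : nc es1 \/ nc es2.
  case: ncs => a [b [ai bi ab]].
  have [ae|ae] := eqVneq a e.
    have be : b != e by rewrite -ae eq_sym.
    by case: (memsplit b bi) => h; [left|right]; exists b, e.
  by case: (memsplit a ai) => h; [left|right]; exists a, e.
case: nc12 => h.
  by apply: (IH vs1 es1) => //; rewrite sz1; lia.
by apply: (IH vs2 es2) => //; rewrite sz2; lia.
Qed.

Definition Sfun (V : finType) (e : {set V}) : seq V -> {set 'I_(#|e|).-1} :=
  epsilon (inhabits (fun _ => set0)) (fun S => edge_decomp S).

Definition sch (V : finType) (e : {set V}) (f : V -> nat) : seq V :=
  epsilon (inhabits [::]) (fun s => edge_bij e s /\ inA s (Sfun e s) f).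

Definition carc (V : finType) (s : seq V) k (S : {set 'I_k}) (b : bool) (u v : V) : bool :=
  [exists j : 'I_(size s), [&& j.+1 < size s, nth u s j == u, nth u s j.+1 == v & inS S j == b]].

Definition arcE (V : finType) (e : {set V}) (f : V -> nat) (u v : V) : bool :=
  carc (sch e f) (Sfun e (sch e f)) false u v || carc (sch e f) (Sfun e (sch e f)) true v u.

Definition Wf (V : finType) (E : {set {set V}}) (f : V -> nat) : {set V * V} :=
  [set p | [exists e in E, carc (sch e f) (Sfun e (sch e f)) false p.1 p.2]].
Definition Tf (V : finType) (E : {set {set V}}) (f : V -> nat) : {set V * V} :=
  [set p | [exists e in E, carc (sch e f) (Sfun e (sch e f)) true p.1 p.2]].

Definition good (V : finType) (E : {set {set V}}) (f : V -> nat) : Prop :=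
  (forall v, 0 < f v) /\ (forall e, e \in E -> nonconstant_on e f).

Definition HypE (V : finType) (E : {set {set V}}) : Prop :=
  forall e, e \in E -> exists S : seq V -> {set 'I_(#|e|).-1}, edge_decomp S.

Lemma Sfun_spec (V : finType) (E : {set {set V}}) e : HypE E -> e \in E -> edge_decomp (Sfun e).
Proof. by move=> H eE; apply: epsilon_spec; apply: H. Qed.

Lemma sch_spec (V : finType) (E : {set {set V}}) (f : V -> nat) e :
  HypE E -> (forall v, 0 < f v) -> e \in E -> nonconstant_on e f ->
  edge_bij e (sch e f) /\ inA (sch e f) (Sfun e (sch e f)) f.
Proof.
move=> H pf eE nc; apply: (epsilon_spec (inhabits [::]) (fun s => edge_bij e s /\ inA s (Sfun e s) f)).
by have [/(_ f (fun v _ => pf v)) [h _] _] := Sfun_spec H eE; apply: h.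
Qed.

Lemma carc_idx (V : finType) (s : seq V) k (S : {set 'I_k}) b u v :
  uniq s -> carc s S b u v ->
  [/\ u \in s, v \in s, index v s = (index u s).+1 & inS S (index u s) = b].
Proof.
move=> us /existsP [j /and4P [hj /eqP eu /eqP ev /eqP eb]].
have hj' : j < size s by apply: ltnW.
split.
- by rewrite -eu mem_nth.
- by rewrite -ev mem_nth.
- by rewrite -eu -ev !index_uniq.
- by rewrite -eu index_uniq.
Qed.

Lemma carc_ineq (V : finType) (s : seq V) k (S : {set 'I_k}) b u v (f : V -> nat) :
  inA s S f -> carc s S b u v -> f u <= f v /\ (b -> f u < f v).
Proof.
move=> hA /existsP [j /and4P [hj /eqP eu /eqP ev /eqP eb]].
have [h1 h2] := hA j hj.
have e1 : nth 0 (map f s) j = f u by rewrite (nth_map u) ?eu // ltnW.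
have e2 : nth 0 (map f s) j.+1 = f v by rewrite (nth_map u) ?ev.
rewrite e1 e2 in h1 h2.
split => // hb; apply: h2; by rewrite eb.
Qed.

Lemma carc_intro (V : finType) (s : seq V) k (S : {set 'I_k}) (x : V) j :
  j.+1 < size s -> carc s S (inS S j) (nth x s j) (nth x s j.+1).
Proof.
move=> hj; have hj' : j < size s by apply: ltnW.
apply/existsP; exists (Ordinal hj'); rewrite /= hj eqxx andbT.
by rewrite (set_nth_default x (nth x s j) hj') (set_nth_default x (nth x s j) hj) !eqxx.
Qed.

Lemma sch_stable (V : finType) (E : {set {set V}}) (f g : V -> nat) :
  HypE E -> good E f -> (forall v, 0 < g v) -> Qc (Wf E f) (Tf E f) g ->
  forall e, e \in E -> nonconstant_on e g /\ sch e g = sch e f.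
Proof.
move=> H [pf ncf] pg /andP[/forallP QW /forallP QT] e eE.
have [bf Af] := sch_spec H pf eE (ncf e eE).
have Ag : inA (sch e f) (Sfun e (sch e f)) g.
  move=> j hj.
  have x : V by case: (sch e f) hj => // x0 _ _; exact x0.
  have hc := carc_intro (Sfun e (sch e f)) x hj.
  have hj' : j < size (sch e f) by apply: ltnW.
  rewrite !(nth_map x) //.
  move: hc; case hb: (inS (Sfun e (sch e f)) j) => hc.
  - have : (nth x (sch e f) j, nth x (sch e f) j.+1) \in Tf E f.
      by rewrite inE; apply/existsP; exists e; rewrite eE.
    move/(implyP (QT _)) => /= lt; split => //; exact: ltnW.
  - have : (nth x (sch e f) j, nth x (sch e f) j.+1) \in Wf E f.
      by rewrite inE; apply/existsP; exists e; rewrite eE.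
    by move/(implyP (QW _)) => /= le; split.
have ncg : nonconstant_on e g.
  have [/(_ g (fun v _ => pg v)) [_ h] _] := Sfun_spec H eE.
  by apply: h; exists (sch e f).
split => //.
have [bg Ag'] := sch_spec H pg eE ncg.
have [_ /(_ g (sch e g) (sch e f) (fun v _ => pg v)) U] := Sfun_spec H eE.
exact: U.
Qed.

Lemma WT_stable (V : finType) (E : {set {set V}}) (f g : V -> nat) :
  HypE E -> good E f -> (forall v, 0 < g v) -> Qc (Wf E f) (Tf E f) g ->
  good E g /\ Wf E g = Wf E f /\ Tf E g = Tf E f.
Proof.
move=> H gf pg Q; have st := sch_stable H gf pg Q.
split; first by split => // e eE; case: (st e eE).
split; apply/setP => p; rewrite !inE; apply/existsP/existsP => [] [e /andP[eE h]];
  exists e; rewrite eE /=; by case: (st e eE) => _ es; rewrite es in h *.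
Qed.

Definition Rf (V : finType) (E : {set {set V}}) (f : V -> nat) : rel V :=
  fun x y => ((x, y) \in Wf E f) || ((y, x) \in Tf E f).

Lemma R_arc (V : finType) (E : {set {set V}}) (f : V -> nat) x y :
  Rf E f x y -> exists2 e, e \in E & arcE e f x y.
Proof.
by rewrite /Rf !inE => /orP[/existsP[e /andP[eE h]]|/existsP[e /andP[eE h]]];
  exists e => //; rewrite /arcE h ?orbT.
Qed.

Lemma sch_bij (V : finType) (E : {set {set V}}) (f : V -> nat) e :
  HypE E -> good E f -> e \in E ->
  uniq (sch e f) /\ forall v, (v \in sch e f) = (v \in e).
Proof.
move=> H [pf nc] eE; have [/andP[u /forallP m] _] := sch_spec H pf eE (nc e eE).
by split => // v; apply/eqP.
Qed.

Lemma arcE_adj (V : finType) (e : {set V}) (f : V -> nat) u v :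
  uniq (sch e f) -> arcE e f u v ->
  [/\ u \in sch e f, v \in sch e f &
     (index v (sch e f) = (index u (sch e f)).+1 \/ index u (sch e f) = (index v (sch e f)).+1)].
Proof.
move=> us /orP[/(carc_idx us)[h1 h2 h3 _]|/(carc_idx us)[h1 h2 h3 _]]; split => //; by [left|right].
Qed.

Lemma arcE_anti (V : finType) (e : {set V}) (f : V -> nat) u v :
  uniq (sch e f) -> arcE e f u v -> arcE e f v u -> False.
Proof.
move=> us /orP[/(carc_idx us)[_ _ h1 b1]|/(carc_idx us)[_ _ h1 b1]]
           /orP[/(carc_idx us)[_ _ h2 b2]|/(carc_idx us)[_ _ h2 b2]].
- move: h1 h2; lia.
- by rewrite b1 in b2.
- by rewrite b1 in b2.
- move: h1 h2; lia.
Qed.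

Lemma ex_max (F : nat -> nat) m : 0 < m -> exists2 k, k < m & forall k', k' < m -> F k' <= F k.
Proof.
elim: m => // [[|m] IH] _.
  by exists 0 => // k'; rewrite ltnS leqn0 => /eqP->.
have [k km mx] := IH isT.
case: (leqP (F m.+1) (F k)) => h.
  exists k; first by apply: ltnW.
  by move=> k'; rewrite ltnS leq_eqVlt => /orP[/eqP->|/mx].
exists m.+1 => // k'; rewrite ltnS leq_eqVlt => /orP[/eqP->//|/mx]; lia.
Qed.

Lemma cyc_max (T : eqType) (vs s : seq T) (A : T -> T -> Prop) :
  uniq vs -> 2 < size vs ->
  (forall u v, A u v -> [/\ u \in s, v \in s &
      (index v s = (index u s).+1 \/ index u s = (index v s).+1)]) ->
  (forall i x, i.+1 < size vs -> A (nth x vs i) (nth x vs i.+1)) ->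
  (forall x, A (last x vs) (head x vs)) -> False.
Proof.
move=> uv m3 adj hp hc.
have [x _] : exists x : T, True by case: (vs) m3 => // x0 _ _; exists x0.
set m := size vs in m3 hp.
pose idx k := index (nth x vs k) s.
have [k0 k0m mx] := ex_max idx (ltnW (ltnW m3)).
have hl : last x vs = nth x vs m.-1 by rewrite nth_last.
have hh : head x vs = nth x vs 0 by rewrite nth0.
have [pk [pkm Ap hpk]] : exists pk, [/\ pk < m, A (nth x vs pk) (nth x vs k0) &
     (pk = m.-1 /\ k0 = 0) \/ (pk = k0.-1 /\ 0 < k0)].
  case: (posnP k0) => h.
    exists m.-1; split; first by lia.
      by rewrite h -hl -hh; apply: hc.
    by left.
  exists k0.-1; split; first by lia.
    by have := hp k0.-1 x; rewrite prednK //; apply; lia.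
  by right.
have [nk [nkm An hnk]] : exists nk, [/\ nk < m, A (nth x vs k0) (nth x vs nk) &
     (nk = 0 /\ k0 = m.-1) \/ (nk = k0.+1 /\ k0.+1 < m)].
  case: (ltnP k0.+1 m) => h.
    by exists k0.+1; split => //; [apply: hp | right].
  have e : k0 = m.-1 by lia.
  exists 0; split; first by lia.
    by rewrite e -hl -hh; apply: hc.
  by left.
have [pin kin ip] := adj _ _ Ap.
have [kin' nin ino] := adj _ _ An.
have mp := mx pk pkm; have mn := mx nk nkm.
rewrite /idx in mp mn.
have eq : nth x vs pk = nth x vs nk.
  apply: (index_inj x pin nin) => /=; lia.
move/eqP: eq; rewrite nth_uniq //; lia.
Qed.

Lemma labels (V : finType) (E : {set {set V}}) (f : V -> nat) y p :
  path (Rf E f) y p -> exists es : seq {set V}, size es = size p /\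
    forall i x, i < size p -> nth set0 es i \in E /\
      arcE (nth set0 es i) f (nth x (y :: p) i) (nth x p i).
Proof.
elim: p y => [|z p IH] y /=; first by exists [::].
case/andP => /R_arc [e eE a] /IH [es [ses hes]].
exists (e :: es); split; first by rewrite /= ses.
by move=> [|i] x //= hi; apply: hes.
Qed.

Lemma arcE_mem (V : finType) (E : {set {set V}}) (f : V -> nat) e u v :
  HypE E -> good E f -> e \in E -> arcE e f u v -> u \in e /\ v \in e.
Proof.
move=> H gf eE a; have [us me] := sch_bij H gf eE.
by have [h1 h2 _] := arcE_adj us a; rewrite -!me.
Qed.

Lemma acyclic (V : finType) (E : {set {set V}}) (f : V -> nat) :
  HypE E -> hypertree E -> good E f -> forall x y, Rf E f x y -> ~~ connect (Rf E f) y x.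
Proof.
move=> H [_ _ noc] gf x y rxy; apply/negP => /connectP [p0 pp0 ex].
move: rxy; rewrite ex; case: (shortenP pp0) => p pp up _ rxy {ex pp0 p0}.
have [es [ses hes]] := labels pp.
have [e0 e0E a0] := R_arc rxy.
have [ncs|ncs] := classic (nc (rcons es e0)).
  apply: (shortcut noc (vs := y :: p) (es := rcons es e0)) => //.
  split; first by rewrite size_rcons ses.
  - exact: up.
  - move=> a; rewrite mem_rcons inE => /orP[/eqP->//|ai].
    rewrite -(nth_index set0 ai); apply: (proj1 (hes _ y _)); by rewrite -ses index_mem.
  split.
  - move=> i x' hi; rewrite nth_rcons ses.
    case: ltnP => h1.
      by have [iE ai] := hes i x' h1; case: (arcE_mem H gf iE ai).
    have -> : i = size p by move: hi => /=; lia.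
    rewrite eqxx; have -> : nth x' (y :: p) (size p) = last y p by have := nth_last x' (y :: p).
    by case: (arcE_mem H gf e0E a0).
  - move=> i x' /= hi; have hi' : i < size p by []; rewrite nth_rcons ses hi'.
    by have [iE ai] := hes i x' hi'; case: (arcE_mem H gf iE ai).
  - by move=> x' /=; rewrite last_rcons; case: (arcE_mem H gf e0E a0).
have alle : forall i, i < size p -> nth set0 es i = e0.
  move=> i hi; apply/eqP; apply: contraT => ne; case: ncs.
  exists (nth set0 es i), e0; split => //; last by rewrite mem_rcons mem_head.
  by rewrite mem_rcons inE mem_nth ?orbT ?ses.
have [us _] := sch_bij H gf e0E.
case: p pp up rxy ses hes alle a0 => [|z [|z2 p]] pp up rxy ses hes alle a0 /=.
- by have [_ _ [] /=] := arcE_adj us a0; lia.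
- have [_ a1] := hes 0 y isT; rewrite /= alle // in a1.
  exact: (arcE_anti us a1 a0).
apply: (cyc_max (vs := y :: z :: z2 :: p) (s := sch e0 f) (A := arcE e0 f)) => //.
- by move=> u v /(arcE_adj us).
- move=> i x' hi; have [_ ai] := hes i x' hi; by rewrite alle in ai.
Qed.

Definition omega (V : finType) (R : rel V) (v : V) : nat := #|[set u | connect R u v]|.
Definition rkf (V : finType) (R : rel V) (v : V) : nat := omega R v * #|V| + enum_rank v.

Lemma rkf_inj (V : finType) (R : rel V) : injective (rkf R).
Proof.
move=> u v e; apply: enum_rank_inj; apply: val_inj => /=.
have := congr1 (modn^~ #|V|) e; rewrite /rkf !modnMDl !modn_small //.
Qed.

Lemma rkf_lt (V : finType) (R : rel V) x y : R x y -> ~~ connect R y x -> rkf R x < rkf R y.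
Proof.
move=> rxy nc.
have lt : omega R x < omega R y.
  apply: proper_card; apply/properP; split.
    by apply/subsetP => u; rewrite !inE => h; apply: connect_trans h (connect1 rxy).
  by exists y; rewrite !inE ?connect0.
have l2 : (omega R x).+1 * #|V| <= omega R y * #|V| by rewrite leq_mul2r lt orbT.
have l3 : nat_of_ord (enum_rank x) < #|V| by [].
rewrite /rkf; move: l2 l3; rewrite mulSn.
set a := omega R x * #|V|; set b := omega R y * #|V|; set r := nat_of_ord (enum_rank x).
set r' := nat_of_ord (enum_rank y); lia.
Qed.

Definition RWT (V : finType) (WT : {set V * V} * {set V * V}) : rel V :=
  fun x y => ((x, y) \in WT.1) || ((y, x) \in WT.2).

Definition realiz (V : finType) (E : {set {set V}}) (WT : {set V * V} * {set V * V}) : Prop :=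
  exists f, good E f /\ (Wf E f, Tf E f) = WT.

Definition nf (V : finType) N (chi : {ffun V -> 'I_N}) : V -> nat := fun v => (val (chi v)).+1.

Lemma proper_good (V : finType) (E : {set {set V}}) N (chi : {ffun V -> 'I_N}) :
  Defs.proper E chi <-> good E (nf chi).
Proof.
split.
  move/forallP => h; split => // e eE; have := implyP (h e) eE.
  case/existsP => u /andP[ue /existsP[v /andP[ve ne]]]; exists u, v; split => //.
  by rewrite /nf => -[] /val_inj /eqP; rewrite (negbTE ne).
case=> _ h; apply/forallP => e; apply/implyP => eE.
have [u [v [ue ve ne]]] := h e eE.
apply/existsP; exists u; rewrite ue /=; apply/existsP; exists v; rewrite ve /=.
by apply/eqP => e'; apply: ne; rewrite /nf e'.
Qed.

Lemma Qc_self (V : finType) (E : {set {set V}}) (f : V -> nat) :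
  HypE E -> good E f -> Qc (Wf E f) (Tf E f) f.
Proof.
move=> H [pf nc]; apply/andP; split; apply/forallP => p; apply/implyP;
  rewrite inE => /existsP[e /andP[eE h]]; have [_ A] := sch_spec H pf eE (nc e eE).
  by case: (carc_ineq A h).
by case: (carc_ineq A h) => _ /(_ isT).
Qed.

Lemma Qc_shift (V : finType) N (W T : {set V * V}) (chi : {ffun V -> 'I_N}) :
  Qc W T (nf chi) = Qc W T (fun v => val (chi v)).
Proof. by rewrite /Qc /nf; congr andb; apply: eq_forallb => p; rewrite ltnS. Qed.

Lemma rk_props (V : finType) (E : {set {set V}}) WT :
  HypE E -> hypertree E -> realiz E WT ->
  (forall p, p \in WT.1 -> rkf (RWT WT) p.1 < rkf (RWT WT) p.2) /\
  (forall p, p \in WT.2 -> rkf (RWT WT) p.2 < rkf (RWT WT) p.1).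
Proof.
move=> H ht [f [gf <-]].
have ac := acyclic H ht gf.
split => -[a b] /= h.
  have r : Rf E f a b by rewrite /Rf h.
  exact: (rkf_lt r (ac _ _ r)).
have r : Rf E f b a by rewrite /Rf h orbT.
exact: (rkf_lt r (ac _ _ r)).
Qed.

Lemma piece_count (V : finType) (E : {set {set V}}) N (alpha : {ffun 'I_N -> nat}) WT :
  HypE E -> realiz E WT ->
  #|[set chi : {ffun V -> 'I_N} | (Defs.proper E chi && cont chi alpha) &&
        ((Wf E (nf chi), Tf E (nf chi)) == WT)]| =
  #|[set chi : {ffun V -> 'I_N} | Qc WT.1 WT.2 (fun v => val (chi v)) && cont chi alpha]|.
Proof.
move=> H [f [gf eWT]]; apply: eq_card => chi; rewrite !inE.
apply/idP/idP.
  case/andP => /andP[/proper_good pg ->] /eqP <-; rewrite andbT /= -Qc_shift.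
  exact: Qc_self.
case/andP => Q ->; rewrite -eWT /= in Q; rewrite -Qc_shift in Q.
have [gg [eW eT]] := WT_stable H gf (fun v => ltn0Sn _) Q.
by rewrite andbT; apply/andP; split; [apply/proper_good | rewrite eW eT eWT].
Qed.

Lemma piece_zero (V : finType) (E : {set {set V}}) N (alpha : {ffun 'I_N -> nat}) WT :
  ~ realiz E WT ->
  #|[set chi : {ffun V -> 'I_N} | (Defs.proper E chi && cont chi alpha) &&
        ((Wf E (nf chi), Tf E (nf chi)) == WT)]| = 0.
Proof.
move=> nr; apply: eq_card0 => chi; rewrite !inE; apply/negP.
case/andP => /andP[/proper_good pg _] /eqP e; apply: nr; by exists (nf chi).
Qed.

Unset Implicit Arguments.
Set Strict Implicit.
Theorem theorem5p1 (V : finType) (E : {set {set V}}) :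
  hypertree E ->
  (forall e, e \in E -> exists S : seq V -> {set 'I_(#|e|).-1}, edge_decomp S) ->
  F_positive E.
Proof.
move=> ht H.
pose cn (S : {set 'I_(#|V|).-1}) := \sum_(WT : {set V * V} * {set V * V})
  (if excluded_middle_informative (realiz E WT) then
     #|[set pi : {ffun V -> 'I_#|V|} | injectiveb pi && Lin WT.1 WT.2 pi && (Des (rkf (RWT WT)) pi == S)]|
   else 0).
exists (fun S => Posz (cn S)); split; first by move=> S.
move=> N alpha.
suff -> : XH_coef E alpha = \sum_(S : {set 'I_(#|V|).-1}) cn S * F_coef S alpha.
  by rewrite (big_morph Posz PoszD (erefl _)); apply: eq_bigr => S _; rewrite PoszM.
rewrite /XH_coef -sum1_card.
rewrite (partition_big (fun chi : {ffun V -> 'I_N} => (Wf E (nf chi), Tf E (nf chi))) predT) //=.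
symmetry; rewrite /cn; under eq_bigr => S _ do rewrite big_distrl /=.
rewrite exchange_big /=; apply: eq_bigr => WT _; symmetry.
have -> : \sum_(i in [set chi : {ffun V -> 'I_N} | Defs.proper E chi &&
      [forall i, #|[set v | chi v == i]| == alpha i]] | (Wf E (nf i), Tf E (nf i)) == WT) 1 =
    #|[set chi : {ffun V -> 'I_N} | (Defs.proper E chi && cont chi alpha) &&
        ((Wf E (nf chi), Tf E (nf chi)) == WT)]|.
  by rewrite -sum1_card; apply: eq_bigl => chi; rewrite !inE.
case: excluded_middle_informative => h; last first.
  by rewrite piece_zero // big1 // => S _; rewrite mul0n.
have [h1 h2] := rk_props H ht h.
by rewrite piece_count // (count_bij alpha (@rkf_inj V (RWT WT)) h1 h2) count_sum.
Qed.
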